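(* Let $\Sigma=\mathbb{Z}_6$ and for $n\in\Sigma$ let $n':=\{n+2,n+3,n+4\}$ (mod 6). Define $n\perp m\iff n\in m'$ and, for $A\subseteq\Sigma$, $A^\perp:=\{m\in\Sigma;\ m\perp a\ \forall a\in A\}$; let $\mathcal{L}:=\{A\subseteq\Sigma; A^{\perp\perp}=A\}$ ordered by inclusion. Then $\perp$ is symmetric, anti-reflexive and separating, $\mathcal{L}$ is an irreducible complete atomistic orthocomplemented lattice (a simple closure space on $\Sigma$) which does not satisfy $\Sigma[x]\cup\Sigma[y]\ne\Sigma$ for all coatoms $x,y$ (e.g. $0'\cup3'=\Sigma$). Moreover, with $R:=(\{0,1,2\}\times\{0,1,2\})\cup(\{3,4,5\}\times\{3,4,5\})$ and $S:=(4'\times\Sigma)\cup(\Sigma\times1')$, one has $R,S\in\Sigma'_\circledast$ (for $\mathcal{L}_1=\mathcal{L}_2=\mathcal{L}$) and $R\subsetneqq S\subsetneqq\Sigma\times\Sigma$; consequently there is no complete atomistic coatomistic lattice $\mathcal{L}_0$ with $\mathcal{F}(\mathcal{L}_0)\cong\mathcal{F}(\mathcal{L})\otimes_C\mathcal{F}(\mathcal{L})$.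
   Context: A relation $\perp$ on $\Sigma$ is separating if for any $p\neq q$ there is $r$ with $p\perp r$ and $q\not\perp r$. For a complete lattice: $\Sigma,\Sigma'$ atoms and coatoms, $\Sigma[a]$ atoms below $a$, $\mathsf{Cl}(\omega)=\{\Sigma[a];a\in\omega\}$. $\Sigma'_\circledast$ is the set of $R\subsetneqq\Sigma_1\times\Sigma_2$ such that for every $(p_1,p_2)$, $\{q_1;(q_1,p_2)\in R\}\in\mathsf{Cl}(\Sigma_1'\cup\{1\})$ and $\{q_2;(p_1,q_2)\in R\}\in\mathsf{Cl}(\Sigma_2'\cup\{1\})$. $\mathbf{Chu}_{2_0}$: objects $(A,r,X)$ with $A,X$ pointed sets and $r:A\times X\to\{0,1\}$ vanishing at base points; arrows $(f,g)$ with pointed $f:A\to B$, $g:Y\to X$ and $s(f(a),y)=r(a,g(y))$; $(A,r,X)^\perp=(X,\check r,A)$; $\mathsf{A}_1\otimes_C\mathsf{A}_2=(A_1\wedge A_2,t,\mathbf{Chu}_{2_0}(\mathsf{A}_1,\mathsf{A}_2^\perp))$ with smash product $A\wedge B=((A\setminus\{0\})\times(B\setminus\{0\}))\cup\{0_\sharp\}$, hom-set pointed by the constant arrow, $t((a_1,a_2),(f,g))=r_1(a_1,g(a_2))$. $\mathcal{F}(\mathcal{L})=(\Sigma\cup\{0\},r,\Sigma'\cup\{1\})$ pointed by $0$ and $1$, $r(p,x)=0\iff p\le x$. *)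

(* Defs.v *)
From mathcomp Require Import all_boot all_order all_algebra.
Set Implicit Arguments. Unset Strict Implicit. Unset Printing Implicit Defensive.
Import GRing.Theory.

Section OrderNotions.
Variables (T : Type) (le : T -> T -> Prop).

Definition partial_order : Prop :=
  (forall x, le x x) /\ (forall x y z, le x y -> le y z -> le x z) /\
  (forall x y, le x y -> le y x -> x = y).
Definition is_lub (P : T -> Prop) (u : T) : Prop :=
  (forall x, P x -> le x u) /\ (forall v, (forall x, P x -> le x v) -> le u v).
Definition is_glb (P : T -> Prop) (m : T) : Prop :=
  (forall x, P x -> le m x) /\ (forall v, (forall x, P x -> le v x) -> le v m).
Definition complete_lattice : Prop :=
  partial_order /\ (forall P, exists u, is_lub P u) /\ (forall P, exists m, is_glb P m).
Definition is_bottom (b : T) : Prop := forall x, le b x.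
Definition is_top (t : T) : Prop := forall x, le x t.
Definition atom (a : T) : Prop :=
  ~ is_bottom a /\ forall c, le c a -> is_bottom c \/ c = a.
Definition coatom (a : T) : Prop :=
  ~ is_top a /\ forall c, le a c -> is_top c \/ c = a.
Definition atomistic : Prop := forall x, is_lub (fun a => atom a /\ le a x) x.
Definition coatomistic : Prop := forall x, is_glb (fun c => coatom c /\ le x c) x.
Definition orthocomplementation (oc : T -> T) : Prop :=
  (forall x, oc (oc x) = x) /\ (forall x y, le x y -> le (oc y) (oc x)) /\
  (forall x m, is_glb (fun z => z = x \/ z = oc x) m -> is_bottom m) /\
  (forall x u, is_lub (fun z => z = x \/ z = oc x) u -> is_top u).
Definition irreducible : Prop :=
  forall (T1 T2 : Type) (le1 : T1 -> T1 -> Prop) (le2 : T2 -> T2 -> Prop)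
         (f : T -> T1 * T2),
    bijective f ->
    (forall x y, le x y <-> (le1 (f x).1 (f y).1 /\ le2 (f x).2 (f y).2)) ->
    (forall a b : T1, a = b) \/ (forall a b : T2, a = b).
End OrderNotions.

Definition separating (S : Type) (perp : S -> S -> Prop) : Prop :=
  forall p q, p <> q -> exists r, perp p r /\ ~ perp q r.

(* ---------- the category Chu_{2_0} (relations valued in Prop = {0,1}) ---------- *)
Record chu := Chu {
  chuA : Type; chuX : Type; chuA0 : chuA; chuX0 : chuX;
  chur : chuA -> chuX -> Prop;
  chur_A0 : forall x, ~ chur chuA0 x;
  chur_X0 : forall a, ~ chur a chuX0 }.

Definition chu_arrow (C D : chu) (f : chuA C -> chuA D) (g : chuX D -> chuX C) : Prop :=
  f (chuA0 C) = chuA0 D /\ g (chuX0 D) = chuX0 C /\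
  forall a y, @chur D (f a) y <-> @chur C a (g y).

Definition chu_iso (C D : chu) : Prop :=
  exists (f : chuA C -> chuA D) (g : chuX D -> chuX C)
         (f' : chuA D -> chuA C) (g' : chuX C -> chuX D),
    chu_arrow f g /\ chu_arrow f' g' /\
    cancel f f' /\ cancel f' f /\ cancel g g' /\ cancel g' g.

Definition chu_dual (C : chu) : chu :=
  @Chu (chuX C) (chuA C) (chuX0 C) (chuA0 C) (fun x a => chur a x)
       (@chur_X0 C) (@chur_A0 C).

Definition chu_hom (C D : chu) :=
  {fg : (chuA C -> chuA D) * (chuX D -> chuX C) | chu_arrow fg.1 fg.2}.

Lemma chu_const_arrow (C D : chu) :
  chu_arrow (fun _ : chuA C => chuA0 D) (fun _ : chuX D => chuX0 C).
Proof.
split; first by []. split; first by [].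
move=> a y; split => H; [by case: (chur_A0 H) | by case: (chur_X0 H)].
Qed.

Definition chu_hom0 (C D : chu) : chu_hom C D :=
  exist (fun fg => chu_arrow fg.1 fg.2)
        ((fun _ : chuA C => chuA0 D), (fun _ : chuX D => chuX0 C))
        (chu_const_arrow C D).

(* smash product of pointed sets: ((A\{0}) x (B\{0})) u {0#}, 0# = None *)
Definition smash (C1 C2 : chu) : Type :=
  option ({a : chuA C1 | a <> chuA0 C1} * {b : chuA C2 | b <> chuA0 C2}).

Definition tensor_r (C1 C2 : chu) (p : smash C1 C2) (h : chu_hom C1 (chu_dual C2)) : Prop :=
  match p with
  | Some (a1, a2) => chur (sval a1) ((sval h).2 (sval a2))
  | None => False
  end.

Lemma tensor_r_A0 (C1 C2 : chu) h : ~ @tensor_r C1 C2 None h.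
Proof. by []. Qed.

Lemma tensor_r_X0 (C1 C2 : chu) p : ~ @tensor_r C1 C2 p (chu_hom0 C1 (chu_dual C2)).
Proof. case: p => [[a1 a2]|] //=; exact: chur_X0. Qed.

Definition tensor (C1 C2 : chu) : chu :=
  @Chu (smash C1 C2) (chu_hom C1 (chu_dual C2)) None (chu_hom0 C1 (chu_dual C2))
       (@tensor_r C1 C2) (@tensor_r_A0 C1 C2) (@tensor_r_X0 C1 C2).

(* F(L) = (Sigma u {0}, r, Sigma' u {1}), pointed by 0 = None and 1 = None;
   r(p,x) holds (i.e. = 1) iff not p <= x. *)
Definition chuF_r (T : Type) (le : T -> T -> Prop)
  (p : option {a : T | atom le a}) (x : option {c : T | coatom le c}) : Prop :=
  match p, x with
  | Some a, Some c => ~ le (sval a) (sval c)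
  | _, _ => False
  end.

Lemma chuF_r_A0 T (le : T -> T -> Prop) x : ~ @chuF_r T le None x.
Proof. by []. Qed.
Lemma chuF_r_X0 T (le : T -> T -> Prop) p : ~ @chuF_r T le p None.
Proof. by case: p => [[a ?]|]. Qed.

Definition chuF (T : Type) (le : T -> T -> Prop) : chu :=
  @Chu (option {a : T | atom le a}) (option {c : T | coatom le c}) None None
       (@chuF_r T le) (@chuF_r_A0 T le) (@chuF_r_X0 T le).

Local Open Scope ring_scope.

Definition primeZ (n : 'Z_6) : {set 'Z_6} := [set n + 2%:R; n + 3%:R; n + 4%:R].
Definition orth (n m : 'Z_6) : bool := n \in primeZ m.
Definition perpS (A : {set 'Z_6}) : {set 'Z_6} := [set m | [forall a in A, orth m a]].
Definition closedL (A : {set 'Z_6}) : bool := perpS (perpS A) == A.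

Lemma orth_sym n m : orth n m = orth m n.
Proof.
rewrite /orth /primeZ !inE.
by case: n m => [[|[|[|[|[|[|//]]]]]] ?] [[|[|[|[|[|[|//]]]]]] ?].
Qed.

Lemma perpS_anti (A B : {set 'Z_6}) : A \subset B -> perpS B \subset perpS A.
Proof.
move=> /subsetP sAB; apply/subsetP => m; rewrite !inE => /forall_inP H.
by apply/forall_inP => a /sAB; apply: H.
Qed.

Lemma perpS_ext (A : {set 'Z_6}) : A \subset perpS (perpS A).
Proof.
apply/subsetP => a Aa; rewrite inE; apply/forall_inP => m; rewrite inE.
by move/forall_inP/(_ a Aa); rewrite orth_sym.
Qed.

Lemma perpS_closed (A : {set 'Z_6}) : closedL (perpS A).
Proof.
rewrite /closedL eqEsubset perpS_ext andbT.
exact/perpS_anti/perpS_ext.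
Qed.

Definition Lt := {A : {set 'Z_6} | closedL A}.
Definition leL (A B : Lt) : Prop := sval A \subset sval B.
Definition ocL (A : Lt) : Lt := exist (fun B => closedL B) (perpS (sval A)) (perpS_closed (sval A)).

(* Sigma[a]: the atoms (points n, identified with {n}) below a *)
Definition sigmaL (a : Lt) : {set 'Z_6} := [set n | [set n] \subset sval a].

Definition sigma_circ (R : {set 'Z_6 * 'Z_6}) : Prop :=
  R \proper setT /\
  forall p1 p2 : 'Z_6,
    (exists a : Lt, (coatom leL a \/ is_top leL a) /\ [set q1 | (q1, p2) \in R] = sigmaL a) /\
    (exists a : Lt, (coatom leL a \/ is_top leL a) /\ [set q2 | (p1, q2) \in R] = sigmaL a).

Definition lowZ : {set 'Z_6} := [set 0; 1; 2%:R].
Definition highZ : {set 'Z_6} := [set 3%:R; 4%:R; 5%:R].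
Definition Rrel : {set 'Z_6 * 'Z_6} := setX lowZ lowZ :|: setX highZ highZ.
Definition Srel : {set 'Z_6 * 'Z_6} := setX (primeZ 4%:R) setT :|: setX setT (primeZ 1).

(* Main.v *)
Require Import Defs.
From mathcomp Require Import all_boot all_order all_algebra.
From Stdlib Require Import FunctionalExtensionality Classical ClassicalEpsilon.
Local Open Scope ring_scope.

Definition pts : seq 'Z_6 := [:: 0; 1; 2%:R; 3%:R; 4%:R; 5%:R].
Lemma mem_pts x : x \in pts. Proof. by case: x => [[|[|[|[|[|[|//]]]]]] ?]. Qed.
Lemma allpts (P : pred 'Z_6) : all P pts -> forall x, P x.
Proof. by move=> /allP H x; apply: H; apply: mem_pts. Qed.
Lemma allptsE (F G : 'Z_6 -> bool) : all (fun x => F x == G x) pts -> forall x, F x = G x.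
Proof. move=> H x; apply/eqP; exact: (@allpts (fun x => F x == G x) H x). Qed.
Lemma allpts2E (F G : 'Z_6 -> 'Z_6 -> bool) :
  all (fun q => all (fun p => F q p == G q p) pts) pts -> forall q p, F q p = G q p.
Proof. move=> H q p; apply/eqP; exact: (@allpts (fun p => F q p == G q p) (@allpts (fun q => all (fun p => F q p == G q p) pts) H q) p). Qed.

Definition orth' (m a : 'Z_6) := (m == a + 2%:R) || (m == a + 3%:R) || (m == a + 4%:R).
Lemma orthE m a : orth m a = orth' m a. Proof. by rewrite /orth /primeZ !inE. Qed.
Definition chi (A : {set 'Z_6}) : 'Z_6 -> bool := fun x => x \in A.
Definition perpM (f : 'Z_6 -> bool) m := all (fun a => f a ==> orth' m a) pts.
Definition closedM f := all (fun m => perpM (perpM f) m == f m) pts.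

Lemma memPerp A : chi (perpS A) = perpM (chi A).
Proof.
apply: functional_extensionality => m; rewrite /chi /perpM inE.
apply/forall_inP/allP => H a.
- move=> _; apply/implyP => Ha; rewrite -orthE; exact: H.
- by move=> Ha; move: (H a (mem_pts a)); rewrite /chi Ha -orthE.
Qed.

Lemma closedE A : closedL A = closedM (chi A).
Proof.
rewrite /closedM -!memPerp /closedL.
apply/eqP/allP => [-> m _ // | H].
apply/setP => m; apply/eqP; exact: H m (mem_pts m).
Qed.

Fixpoint allf n : seq (seq bool) :=
  if n is n'.+1 then map (cons true) (allf n') ++ map (cons false) (allf n') else [:: [::]].
Lemma mem_allf n l : size l = n -> l \in allf n.
Proof.
elim: n l => [|n IH] [|b l] //=.
move=> [e]; rewrite mem_cat; apply/orP; case: b; [left|right]; apply: map_f; exact: IH.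
Qed.
Definition fofl (l : seq bool) (x : 'Z_6) : bool := nth false l (val x).
Definition listA (A : {set 'Z_6}) := [seq x \in A | x <- pts].
Lemma fofl_listA A : fofl (listA A) = chi A.
Proof.
apply: functional_extensionality => x; rewrite /fofl /listA /chi.
by case: x => [[|[|[|[|[|[|//]]]]]] ?] /=; congr (_ \in A); apply: val_inj.
Qed.
Definition closedList := filter (fun l => closedM (fofl l)) (allf 6).
Lemma bruteC (P : ('Z_6 -> bool) -> bool) :
  all (fun l => P (fofl l)) closedList -> forall A, closedL A -> P (chi A).
Proof.
move=> /allP H A hA; rewrite -fofl_listA; apply: H.
rewrite mem_filter fofl_listA -closedE hA andTb; apply: mem_allf; by rewrite size_map.
Qed.

Lemma subE (A B : {set 'Z_6}) : (A \subset B) = all (fun x => chi A x ==> chi B x) pts.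
Proof.
apply/subsetP/allP => H x.
- move=> _; apply/implyP; exact: H.
- by move=> xA; move/implyP: (H x (mem_pts x)); apply.
Qed.
Lemma setTE (A : {set 'Z_6}) : (A == setT) = all (chi A) pts.
Proof.
apply/eqP/allP => [-> x _|H]; first by rewrite /chi inE.
apply/setP => x; rewrite inE; exact: H x (mem_pts x).
Qed.
Lemma eqsetE (A B : {set 'Z_6}) : (A == B) = all (fun x => chi A x == chi B x) pts.
Proof.
apply/eqP/allP => [-> x _ //|H].
apply/setP => x; apply/eqP; exact: H x (mem_pts x).
Qed.
Lemma chi_prime k : chi (primeZ k) = fun x => orth' x k.
Proof. apply: functional_extensionality => x; exact: orthE. Qed.

Lemma closed0 : closedL set0.
Proof.
rewrite closedE; have -> : chi set0 = fun _ => false.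
  by apply: functional_extensionality => x; rewrite /chi inE.
by vm_compute.
Qed.
Lemma closedT : closedL setT.
Proof.
rewrite closedE; have -> : chi setT = fun _ => true.
  by apply: functional_extensionality => x; rewrite /chi inE.
by vm_compute.
Qed.
Lemma closed1 n : closedL [set n].
Proof.
rewrite closedE; have -> : chi [set n] = fun x => x == n.
  by apply: functional_extensionality => x; rewrite /chi inE.
move: n; apply: (@allpts (fun n => closedM (fun x => x == n))); by vm_compute.
Qed.
Lemma closedP k : closedL (primeZ k).
Proof.
rewrite closedE chi_prime.
move: k; apply: (@allpts (fun k => closedM (fun x => orth' x k))); by vm_compute.
Qed.

Definition mkL {A} (h : closedL A) : Lt := exist (fun B => closedL B) A h.
Definition Lbot := mkL closed0.
Definition Ltop := mkL closedT.
Definition single n := mkL (closed1 n).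
Definition Ck k := mkL (closedP k).

Lemma antirefl n : ~~ orth n n.
Proof. rewrite orthE; move: n; apply: (@allpts (fun n => ~~ orth' n n)); by vm_compute. Qed.

Lemma clE (x : Lt) : perpS (perpS (sval x)) = sval x. Proof. exact/eqP/(svalP x). Qed.
Lemma leL_anti x y : leL x y -> leL y x -> x = y.
Proof. move=> h1 h2; apply: val_inj; apply/eqP; by rewrite eqEsubset h1 h2. Qed.

Definition pb (Q : Prop) : bool := if excluded_middle_informative Q then true else false.
Lemma pbP Q : reflect Q (pb Q).
Proof. rewrite /pb; case: excluded_middle_informative => h; by constructor. Qed.

Lemma lub_ex (P : Lt -> Prop) : exists u, is_lub leL P u.
Proof.
pose U := [set n | pb (exists A : Lt, P A /\ n \in sval A)].
exists (mkL (perpS_closed (perpS U))); split.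
- move=> A PA; rewrite /leL /=; apply: (subset_trans _ (perpS_ext U)).
  apply/subsetP => n nA; rewrite inE; apply/pbP; by exists A.
- move=> V HV; rewrite /leL /= -(clE V); apply/perpS_anti/perpS_anti.
  apply/subsetP => n; rewrite inE => /pbP [A [PA nA]]; exact: (subsetP (HV A PA)).
Qed.

Lemma glb_of_lub T (le : T -> T -> Prop) :
  (forall P, exists u, is_lub le P u) -> forall P, exists m, is_glb le P m.
Proof.
move=> H P; case: (H (fun v => forall x, P x -> le v x)) => m [m1 m2].
exists m; split.
- move=> x Px; apply: m2 => v Hv; exact: Hv x Px.
- move=> v Hv; exact: m1 v Hv.
Qed.

Lemma complete : complete_lattice leL.
Proof.
split; last by split; [exact: lub_ex | exact: glb_of_lub lub_ex].
split; first by move=> x; exact: subxx.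
split; first by move=> x y z; exact: subset_trans.
exact: leL_anti.
Qed.

Lemma atom_single n : atom leL (single n).
Proof.
split.
- move=> hb; have := hb Lbot; rewrite /leL /= sub1set inE //.
- move=> c; rewrite /leL /= subset1 => /orP [e|e].
    by right; apply: val_inj; exact/eqP.
  by left => y; rewrite /leL (eqP e) sub0set.
Qed.

Lemma atom_char (a : Lt) : atom leL a -> exists n, sval a = [set n].
Proof.
case=> nb hmin.
case: (set_0Vmem (sval a)) => [e|[n na]].
  by exfalso; apply: nb => y; rewrite /leL e sub0set.
exists n; case: (hmin (single n)).
- by rewrite /leL /= sub1set.
- move=> hb; have := hb Lbot; rewrite /leL /= sub1set inE //.
- by move=> <-.
Qed.

Lemma atomistic_L : atomistic leL.
Proof.
move=> x; split; first by move=> a [].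
move=> v Hv; apply/subsetP => n nx.
have h : leL (single n) x by rewrite /leL /= sub1set.
by have := Hv (single n) (conj (atom_single n) h); rewrite /leL /= sub1set.
Qed.

Lemma disj {A : {set 'Z_6}} {n} : n \in A -> n \in perpS A -> False.
Proof.
move=> nA; rewrite inE => /forall_inP /(_ n nA) h.
by move: (antirefl n); rewrite h.
Qed.

Lemma ortho : orthocomplementation leL ocL.
Proof.
split.
  by move=> x; apply: val_inj; rewrite /= clE.
split.
  by move=> x y; exact: perpS_anti.
split.
  move=> x m [Hm _] y; rewrite /leL; apply/subsetP => n nm.
  case: (disj (subsetP (Hm x (or_introl erefl)) n nm)
              (subsetP (Hm (ocL x) (or_intror erefl)) n nm)).
move=> x u [Hu _] y; rewrite /leL; apply/subsetP => n _.
rewrite -(clE u) inE; apply/forall_inP => m mu; exfalso.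
have h1 : m \in perpS (sval x) by exact: (subsetP (perpS_anti (Hu x (or_introl erefl)))).
have h2 : m \in perpS (perpS (sval x)) by exact: (subsetP (perpS_anti (Hu (ocL x) (or_intror erefl)))).
by rewrite clE in h2; exact: (disj h2 h1).
Qed.

Lemma closedI A B : closedL A -> closedL B -> closedL (A :&: B).
Proof.
move=> hA hB; rewrite /closedL eqEsubset perpS_ext andbT subsetI.
apply/andP; split.
- by rewrite -{2}(eqP hA); apply/perpS_anti/perpS_anti; exact: subsetIl.
- by rewrite -{2}(eqP hB); apply/perpS_anti/perpS_anti; exact: subsetIr.
Qed.

Lemma sup_prime {A : {set 'Z_6}} {k} : closedL A -> primeZ k \subset A -> A = primeZ k \/ A = setT.
Proof.
move=> hA; rewrite subE chi_prime.
have H := @bruteC (fun f => all (fun k => all (fun x => orth' x k ==> f x) pts ==>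
   (all (fun x => f x == orth' x k) pts || all f pts)) pts).
have {}H := H ltac:(vm_compute; reflexivity) A hA.
move: (allP H k (mem_pts k)) => /= /implyP h /h /orP [e|e]; [left|right]; apply/eqP.
  by rewrite eqsetE chi_prime.
by rewrite setTE.
Qed.

Lemma notT_prime k : ~ (setT \subset primeZ k).
Proof.
move=> /subsetP /(_ k (in_setT k)) hk.
have hk' : orth k k := hk.
by rewrite (negbTE (antirefl k)) in hk'.
Qed.

Lemma coatom_prime k : coatom leL (Ck k).
Proof.
split.
  by move=> ht; apply: (notT_prime k); exact: (ht Ltop).
move=> c hc; case: (sup_prime (svalP c) hc) => e.
  by right; apply: val_inj; rewrite /= e.
by left => y; rewrite /leL e subsetT.
Qed.

Definition splitP (f g : 'Z_6 -> bool) : bool :=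
  ~~ all f pts ==> ~~ all g pts ==> all (fun x => f x || g x) pts ==>
  has (fun k => ~~ all (fun x => f x ==> orth' x k) pts && ~~ all (fun x => g x ==> orth' x k) pts) pts.

Lemma noSplit (A B : {set 'Z_6}) : closedL A -> closedL B -> A != setT -> B != setT ->
  (forall n, (n \in A) || (n \in B)) -> (forall k, (A \subset primeZ k) || (B \subset primeZ k)) -> False.
Proof.
move=> hA hB nA nB cov coa.
have Hc : all (fun l => all (fun l' => splitP (fofl l) (fofl l')) closedList) closedList.
  by vm_compute.
have H1 := @bruteC (fun f => all (fun l' => splitP f (fofl l')) closedList) Hc A hA.
have H2 := @bruteC (fun g => splitP (chi A) g) H1 B hB.
have c1 : all (fun x => chi A x || chi B x) pts by apply/allP => x _; exact: cov x.
move: H2; rewrite /splitP -!setTE nA nB c1 !implyTb => H; case/hasP: H => k _ /andP [h1 h2].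
by move: (coa k); rewrite !subE chi_prime (negbTE h1) (negbTE h2).
Qed.

Lemma irr : irreducible leL.
Proof.
move=> T1 T2 le1 le2 f [fi fK fiK] Hle.
have Lb x : leL Lbot x by apply: sub0set.
have Lt' x : leL x Ltop by apply: subsetT.
have Rf x : leL x x by apply: subxx.
have P1 x y : leL x y -> le1 (f x).1 (f y).1 by move=> h; exact: ((Hle x y).1 h).1.
have P2 x y : leL x y -> le2 (f x).2 (f y).2 by move=> h; exact: ((Hle x y).1 h).2.
have botE x : leL x Lbot -> x = Lbot by move=> h; exact: leL_anti h (Lb x).
have triv2 : (f Lbot).2 = (f Ltop).2 -> forall a c : T2, a = c.
  move=> e.
  suff H : forall z, z = (f Lbot).2 by move=> a c; rewrite (H a) (H c).
  move=> z.
  have h1 : leL (fi ((f Lbot).1, z)) Lbot.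
    apply/Hle; rewrite fiK /=; split; first exact: P1 (Rf Lbot).
    rewrite e; move: (P2 _ _ (Lt' (fi ((f Lbot).1, z)))); by rewrite fiK.
  by move: (f_equal f (botE _ h1)); rewrite fiK => <-.
have triv1 : (f Lbot).1 = (f Ltop).1 -> forall a c : T1, a = c.
  move=> e.
  suff H : forall z, z = (f Lbot).1 by move=> a c; rewrite (H a) (H c).
  move=> z.
  have h1 : leL (fi (z, (f Lbot).2)) Lbot.
    apply/Hle; rewrite fiK /=; split; last exact: P2 (Rf Lbot).
    rewrite e; move: (P1 _ _ (Lt' (fi (z, (f Lbot).2)))); by rewrite fiK.
  by move: (f_equal f (botE _ h1)); rewrite fiK => <-.
pose u := fi ((f Ltop).1, (f Lbot).2).
pose v := fi ((f Lbot).1, (f Ltop).2).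
have fu : f u = ((f Ltop).1, (f Lbot).2) by rewrite fiK.
have fv : f v = ((f Lbot).1, (f Ltop).2) by rewrite fiK.
case: (boolP (sval u == setT)) => hu.
  right; apply: triv2.
  have eu : u = Ltop by apply: val_inj; exact/eqP.
  by move: fu; rewrite eu => ->.
case: (boolP (sval v == setT)) => hv.
  left; apply: triv1.
  have ev : v = Ltop by apply: val_inj; exact/eqP.
  by move: fv; rewrite ev => ->.
exfalso.
have cover n : (n \in sval u) || (n \in sval v).
  apply/negPn/negP => /norP [nu nv].
  pose x := single n.
  have x1x : leL (fi ((f x).1, (f Lbot).2)) x.
    apply/Hle; rewrite fiK /=; split; [exact: P1 (Rf x) | exact: P2 (Lb x)].
  have x1u : leL (fi ((f x).1, (f Lbot).2)) u.
    apply/Hle; rewrite fiK fu /=; split; [exact: P1 (Lt' x) | exact: P2 (Rf Lbot)].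
  have x2x : leL (fi ((f Lbot).1, (f x).2)) x.
    apply/Hle; rewrite fiK /=; split; [exact: P1 (Lb x) | exact: P2 (Rf x)].
  have x2v : leL (fi ((f Lbot).1, (f x).2)) v.
    apply/Hle; rewrite fiK fv /=; split; [exact: P1 (Rf Lbot) | exact: P2 (Lt' x)].
  have e1 : leL (fi ((f x).1, (f Lbot).2)) Lbot.
    rewrite /leL; apply/subsetP => m hm.
    have := subsetP x1x m hm; rewrite /= inE => /eqP em.
    by have := subsetP x1u m hm; rewrite em (negbTE nu).
  have e2 : leL (fi ((f Lbot).1, (f x).2)) Lbot.
    rewrite /leL; apply/subsetP => m hm.
    have := subsetP x2x m hm; rewrite /= inE => /eqP em.
    by have := subsetP x2v m hm; rewrite em (negbTE nv).
  have xb : leL x Lbot.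
    apply/Hle; split.
      by move: (P1 _ _ e1); rewrite fiK.
    by move: (P2 _ _ e2); rewrite fiK.
  by have := subsetP xb n (set11 n); rewrite inE.
have coat k : (sval u \subset primeZ k) || (sval v \subset primeZ k).
  pose c := Ck k.
  have cy1 : leL c (fi ((f c).1, (f Ltop).2)).
    apply/Hle; rewrite fiK /=; split; [exact: P1 (Rf c) | exact: P2 (Lt' c)].
  have vy1 : leL v (fi ((f c).1, (f Ltop).2)).
    apply/Hle; rewrite fiK fv /=; split; [exact: P1 (Lb c) | exact: P2 (Rf Ltop)].
  have cy2 : leL c (fi ((f Ltop).1, (f c).2)).
    apply/Hle; rewrite fiK /=; split; [exact: P1 (Lt' c) | exact: P2 (Rf c)].
  have uy2 : leL u (fi ((f Ltop).1, (f c).2)).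
    apply/Hle; rewrite fiK fu /=; split; [exact: P1 (Rf Ltop) | exact: P2 (Lb c)].
  case: (sup_prime (svalP (fi ((f c).1, (f Ltop).2))) cy1) => e1.
    by apply/orP; right; move: vy1; rewrite /leL e1.
  case: (sup_prime (svalP (fi ((f Ltop).1, (f c).2))) cy2) => e2.
    by apply/orP; left; move: uy2; rewrite /leL e2.
  exfalso.
  have t1 : leL Ltop (fi ((f c).1, (f Ltop).2)) by rewrite /leL e1.
  have t2 : leL Ltop (fi ((f Ltop).1, (f c).2)) by rewrite /leL e2.
  have tc : leL Ltop c.
    apply/Hle; split.
      by move: (P1 _ _ t1); rewrite fiK.
    by move: (P2 _ _ t2); rewrite fiK.
  exact: (notT_prime k tc).
exact: (@noSplit _ _ (svalP u) (svalP v) hu hv cover coat).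
Qed.

Definition lowb (x : 'Z_6) := (x == 0) || (x == 1) || (x == 2%:R).
Lemma lowE x : (x \in lowZ) = lowb x. Proof. by rewrite /lowZ !inE. Qed.
Lemma low4 x : (x \in primeZ 4%:R) = lowb x.
Proof. change (orth x 4%:R = lowb x); rewrite orthE; move: x; apply: allptsE; by vm_compute. Qed.
Lemma high1 x : (x \in primeZ 1) = ~~ lowb x.
Proof. change (orth x 1 = ~~ lowb x); rewrite orthE; move: x; apply: allptsE; by vm_compute. Qed.

Lemma RmemE q p : ((q, p) \in Rrel) = (if lowb p then lowb q else ~~ lowb q).
Proof.
rewrite /Rrel /highZ !inE /=; move: q p; apply: allpts2E; by vm_compute.
Qed.
Lemma SmemE q p : ((q, p) \in Srel) = (lowb q || ~~ lowb p).
Proof.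
rewrite /Srel !inE /=; move: q p; apply: allpts2E; by vm_compute.
Qed.

Lemma sigmaL_Ck k : sigmaL (Ck k) = primeZ k.
Proof. by apply/setP => n; rewrite inE sub1set. Qed.
Lemma sigmaL_top : sigmaL Ltop = setT.
Proof. by apply/setP => n; rewrite !inE subsetT. Qed.

Lemma selE c x : (x \in sigmaL (if c then Ck 4%:R else Ck 1)) = (if c then lowb x else ~~ lowb x).
Proof. by case: c; rewrite sigmaL_Ck ?low4 ?high1. Qed.

Lemma circR : sigma_circ Rrel.
Proof.
split.
  rewrite properT; apply/eqP => h.
  by have := in_setT (0 : 'Z_6, 3%:R : 'Z_6); rewrite -h RmemE.
move=> p1 p2; split.
- exists (if lowb p2 then Ck 4%:R else Ck 1); split.
    by left; case: (lowb p2); apply: coatom_prime.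
  by apply/setP => q; rewrite inE RmemE selE.
- exists (if lowb p1 then Ck 4%:R else Ck 1); split.
    by left; case: (lowb p1); apply: coatom_prime.
  apply/setP => q; rewrite inE RmemE selE.
  move: p1 q; apply: allpts2E; by vm_compute.
Qed.

Lemma circS : sigma_circ Srel.
Proof.
split.
  rewrite properT; apply/eqP => h.
  by have := in_setT (3%:R : 'Z_6, 0 : 'Z_6); rewrite -h SmemE.
move=> p1 p2; split.
- exists (if lowb p2 then Ck 4%:R else Ltop); split.
    case: (lowb p2); [left; exact: coatom_prime | right => y; exact: subsetT].
  apply/setP => q; rewrite inE SmemE.
  case: (lowb p2); rewrite ?sigmaL_Ck ?sigmaL_top ?low4 ?inE ?orbF ?orbT //.
- exists (if lowb p1 then Ltop else Ck 1); split.
    case: (lowb p1); [right => y; exact: subsetT | left; exact: coatom_prime].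
  apply/setP => q; rewrite inE SmemE.
  case: (lowb p1); rewrite ?sigmaL_Ck ?sigmaL_top ?high1 ?inE ?orbF ?orbT //.
Qed.

Lemma allpts2 (F : 'Z_6 -> 'Z_6 -> bool) :
  all (fun q => all (fun p => F q p) pts) pts -> forall q p, F q p.
Proof. move=> H q p; exact: (@allpts (fun p => F q p) (@allpts (fun q => all (fun p => F q p) pts) H q) p). Qed.

Lemma RS : Rrel \proper Srel.
Proof.
rewrite properE; apply/andP; split.
  apply/subsetP => [[q p]]; rewrite RmemE SmemE; apply/implyP.
  move: q p; apply: (@allpts2 (fun q p => (if lowb p then lowb q else ~~ lowb q) ==> (lowb q || ~~ lowb p))).
  by vm_compute.
apply/negP => /subsetP /(_ (0, 3%:R)).
by rewrite RmemE SmemE => /(_ isT).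
Qed.

Lemma ST : Srel \proper setT.
Proof. by case: circS. Qed.

Definition PCk k : {c : Lt | coatom leL c} := exist _ (Ck k) (coatom_prime k).
Definition Asing n : {a : Lt | atom leL a} := exist _ (single n) (atom_single n).
Definition isLow (A : {a : Lt | atom leL a}) : bool := sval (sval A) \subset lowZ.
Definition gR (z : option {a : Lt | atom leL a}) : option {c : Lt | coatom leL c} :=
  match z with Some A => Some (if isLow A then PCk 4%:R else PCk 1) | None => None end.
Definition fS (z : option {a : Lt | atom leL a}) : option {c : Lt | coatom leL c} :=
  match z with Some A => if isLow A then None else Some (PCk 1) | None => None end.
Definition gS (z : option {a : Lt | atom leL a}) : option {c : Lt | coatom leL c} :=
  match z with Some A => if isLow A then Some (PCk 4%:R) else None | None => None end.

Lemma isLowE (A : {a : Lt | atom leL a}) n : sval (sval A) = [set n] -> isLow A = lowb n.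
Proof. by move=> e; rewrite /isLow e sub1set lowE. Qed.

Lemma key c : sval (sval (if c then PCk 4%:R else PCk 1)) = if c then primeZ 4%:R else primeZ 1.
Proof. by case: c. Qed.

Lemma selsym a b : (b \in (if lowb a then primeZ 4%:R else primeZ 1)) =
                   (a \in (if lowb b then primeZ 4%:R else primeZ 1)).
Proof.
have E x y : (y \in (if lowb x then primeZ 4%:R else primeZ 1)) = (if lowb x then lowb y else ~~ lowb y).
  by case: (lowb x); rewrite ?low4 ?high1.
rewrite !E; move: a b; apply: allpts2E; by vm_compute.
Qed.

Lemma arrowR : @chu_arrow (chuF leL) (chu_dual (chuF leL)) gR gR.
Proof.
split; first by []. split; first by [].
move=> [A|] [B|] /=; try by split.
case: (@atom_char _ (svalP A)) => a ea; case: (@atom_char _ (svalP B)) => b eb.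
rewrite (isLowE _ _ ea) (isLowE _ _ eb) /leL !key ea eb !sub1set selsym.
by split.
Qed.

Lemma arrowS : @chu_arrow (chuF leL) (chu_dual (chuF leL)) fS gS.
Proof.
split; first by []. split; first by [].
move=> [A|] [B|] /=; try by split.
case: (@atom_char _ (svalP A)) => a ea; case: (@atom_char _ (svalP B)) => b eb.
rewrite (isLowE _ _ ea) (isLowE _ _ eb).
case ha: (lowb a); case hb: (lowb b) => /=; rewrite /leL /= ?ea ?eb ?sub1set ?low4 ?high1 ?ha ?hb;
  split => // h; exfalso; exact: h.
Qed.

Definition yR : chu_hom (chuF leL) (chu_dual (chuF leL)) :=
  exist (fun fg : (chuA (chuF leL) -> chuA (chu_dual (chuF leL))) * (chuX (chu_dual (chuF leL)) -> chuX (chuF leL)) => chu_arrow fg.1 fg.2) (gR, gR) arrowR.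
Definition yS : chu_hom (chuF leL) (chu_dual (chuF leL)) :=
  exist (fun fg : (chuA (chuF leL) -> chuA (chu_dual (chuF leL))) * (chuX (chu_dual (chuF leL)) -> chuX (chuF leL)) => chu_arrow fg.1 fg.2) (fS, gS) arrowS.

Lemma SomeNN (A : {a : Lt | atom leL a}) : Some A <> chuA0 (chuF leL).
Proof. by []. Qed.
Definition nz (A : {a : Lt | atom leL a}) : {a : chuA (chuF leL) | a <> chuA0 (chuF leL)} :=
  exist _ (Some A) (SomeNN A).

Definition pstar : chuA (tensor (chuF leL) (chuF leL)) := Some (nz (Asing 0), nz (Asing 3%:R)).
Definition pstar2 : chuA (tensor (chuF leL) (chuF leL)) := Some (nz (Asing 3%:R), nz (Asing 0)).

Lemma isLow_sing n : isLow (Asing n) = lowb n.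
Proof. exact: isLowE. Qed.

Lemma TR1 : tensor_r pstar yR.
Proof. by rewrite /tensor_r /= isLow_sing /leL /= sub1set high1. Qed.
Lemma TS1 : ~ tensor_r pstar yS.
Proof. by rewrite /tensor_r /= isLow_sing /= => -[]. Qed.
Lemma TS2 : tensor_r pstar2 yS.
Proof. by rewrite /tensor_r /= isLow_sing /leL /= sub1set low4. Qed.
Lemma mono p : tensor_r p yS -> tensor_r p yR.
Proof.
case: p => [[a1 [[A|] h]]|] //=.
case: (isLow A) => //; by case: (sval a1) => [?|].
Qed.

Lemma no_L0 : ~ (exists (T0 : Type) (le0 : T0 -> T0 -> Prop),
       complete_lattice le0 /\ atomistic le0 /\ coatomistic le0 /\
       chu_iso (chuF le0) (tensor (chuF leL) (chuF leL))).
Proof.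
move=> [T0 [le0 [_ [hat [_ [f [g [f' [g' [[f0 [g0 fr]] [_ [_ [f'f _]]]]]]]]]]]]].
have fr' a y : tensor_r (f a) y <-> chuF_r a (g y) := fr a y.
have [As [cR [eAs [egR nR]]]] : exists As cR, f' pstar = Some As /\ g yR = Some cR /\
     ~ le0 (sval As) (sval cR).
  have := (fr' (f' pstar) yR).1; rewrite f'f => /(_ TR1).
  case: (f' pstar) => [As|] //; case: (g yR) => [cR|] // h.
  by exists As, cR.
have [cS egS] : exists cS, g yS = Some cS.
  have := (fr' (f' pstar2) yS).1; rewrite f'f => /(_ TS2).
  case: (f' pstar2) => [?|] //; case: (g yS) => [cS|] // _.
  by exists cS.
have AcS : le0 (sval As) (sval cS).
  apply: NNPP => h; apply: TS1.
  have := (fr' (f' pstar) yS).2; rewrite f'f eAs egS; apply; exact: h.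
have sub : le0 (sval cR) (sval cS).
  apply: (hat (sval cR)).2 => x [ax xc].
  apply: NNPP => h.
  have h1 : ~ tensor_r (f (Some (exist _ x ax))) yR.
    by move/(fr' _ _).1; rewrite egR /=.
  apply: h1; apply: mono; apply/(fr' _ _).2; rewrite egS /=; exact: h.
case: ((svalP cR).2 (sval cS) sub) => [ht|e].
  exact: (svalP cS).1 ht.
by apply: nR; rewrite -e.
Qed.

Theorem mainTheorem12 :
  (* _|_ is symmetric, anti-reflexive and separating *)
  (forall n m : 'Z_6, orth n m -> orth m n) /\
  (forall n : 'Z_6, ~~ orth n n) /\
  separating (fun n m : 'Z_6 => orth n m) /\
  (* L is an irreducible complete atomistic orthocomplemented lattice *)
  complete_lattice leL /\ atomistic leL /\ orthocomplementation leL ocL /\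
  irreducible leL /\
  (* ... a simple closure space on Sigma *)
  closedL setT /\ (forall A B, closedL A -> closedL B -> closedL (A :&: B)) /\
  closedL set0 /\ (forall n : 'Z_6, closedL [set n]) /\
  (* failure of Sigma[x] u Sigma[y] <> Sigma for coatoms: 0' u 3' = Sigma *)
  (exists x y : Lt, coatom leL x /\ coatom leL y /\
     sval x = primeZ 0 /\ sval y = primeZ 3%:R /\ sigmaL x :|: sigmaL y = setT) /\
  (* R, S in Sigma'_circledast with R < S < Sigma x Sigma *)
  sigma_circ Rrel /\ sigma_circ Srel /\ Rrel \proper Srel /\ Srel \proper setT /\
  (* no complete atomistic coatomistic L0 with F(L0) ~ F(L) (x)_C F(L) *)
  ~ (exists (T0 : Type) (le0 : T0 -> T0 -> Prop),
       complete_lattice le0 /\ atomistic le0 /\ coatomistic le0 /\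
       chu_iso (chuF le0) (tensor (chuF leL) (chuF leL))).
Proof.
split; first by move=> n m; rewrite orth_sym.
split; first exact: antirefl.
split.
  move=> p q npq.
  have H : all (fun p => all (fun q => (p != q) ==> has (fun r => orth' p r && ~~ orth' q r) pts) pts) pts.
    by vm_compute.
  have := @allpts2 _ H p q; rewrite (introN eqP npq) implyTb => /hasP [r _ /andP [h1 h2]].
  by exists r; rewrite !orthE; split => //; apply/negP.
split; first exact: complete.
split; first exact: atomistic_L.
split; first exact: ortho.
split; first exact: irr.
split; first exact: closedT.
split; first exact: closedI.
split; first exact: closed0.
split; first exact: closed1.
split.
  exists (Ck 0), (Ck 3%:R); split; first exact: coatom_prime.
  split; first exact: coatom_prime.
  do 2 split => //.
  apply/setP => n; rewrite !sigmaL_Ck in_setU in_setT.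
  change ((orth n 0 || orth n 3%:R) = true); rewrite !orthE.
  move: n; apply: (@allpts (fun n => orth' n 0 || orth' n 3%:R)); by vm_compute.
split; first exact: circR.
split; first exact: circS.
split; first exact: RS.
split; first exact: ST.
exact: no_L0.
Qed.
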